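(* Let $\mathcal{H}^c_{A_{n-1}}$ be the degenerate affine Hecke–Clifford algebra of type $A_{n-1}$ and let $w_{(n)}=s_1s_2\cdots s_{n-1}$, the $n$-cycle $(1\,2\,\cdots\,n)$. For every subset $I\subseteq\{1,\dots,n\}$ with $|I|$ even there is $\epsilon\in\{1,-1\}$ with $w_{(n)}c_I-\epsilon\, w_{(n)}\in[\mathcal{H}^c_{A_{n-1}},\mathcal{H}^c_{A_{n-1}}]$.
   Context: $\mathcal{H}^c_{A_{n-1}}$ (parameter $u\in\mathbb{C}$) is the $\mathbb{C}$-algebra generated by commuting $x_1,\dots,x_n$, Clifford generators $c_1,\dots,c_n$ ($c_i^2=1$, $c_ic_j=-c_jc_i$ for $i\ne j$) and the symmetric group $S_n$ (simple reflections $s_i=(i,i+1)$), with $\mathbb{C}[x]$, the Clifford algebra and $\mathbb{C}S_n$ subalgebras and relations $x_ic_i=-c_ix_i$, $x_ic_j=c_jx_i$ ($i\ne j$), $\sigma c_i=c_{\sigma(i)}\sigma$ ($\sigma\in S_n$), $x_{i+1}s_i-s_ix_i=u(1-c_{i+1}c_i)$, $x_js_i=s_ix_j$ ($j\ne i,i+1$). For $I=\{i_1<\dots<i_m\}$, $c_I=c_{i_1}\cdots c_{i_m}$. $[H,H]$ denotes the linear span of all commutators $hh'-h'h$. *)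

(* Defs.v *)
From HB Require Import structures.
From mathcomp Require Import all_boot all_order all_algebra all_fingroup.
From mathcomp Require Import complex Rstruct.
Set Implicit Arguments. Unset Strict Implicit. Unset Printing Implicit Defensive.
Import GRing.Theory.
Local Open Scope ring_scope.

Definition CC : rcfType := Rdefinitions.R.
Notation Cplx := (complex CC).

(* c_I = c_{i_1} ... c_{i_m} with i_1 < ... < i_m (the big product over a
   subset of 'I_n runs in increasing order). *)
Definition cI (A : pzRingType) (n : nat) (c : 'I_n -> A) (I : {set 'I_n}) : A :=
  \prod_(i in I) c i.

Definition in_comm_span (A : algType Cplx) (v : A) : Prop :=
  exists s : seq (Cplx * A * A),
    v = \sum_(t <- s) t.1.1 *: (t.1.2 * t.2 - t.2 * t.1.2).

(* The n-cycle (1 2 ... n) : i |-> i+1 mod n (0-based indices). *)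
Definition ncycle (n : nat) : {perm 'I_n} := perm (@ordS_inj n).

(* MathComp's permutation product satisfies (s * t) k = t (s k), i.e. s * t is
   the composite "t after s", so a homomorphism from S_n (composition of
   functions) satisfies sigma (s * t) = sigma t * sigma s. *)
Definition HC_relations (n : nat) (u : Cplx) (A : algType Cplx)
  (x c : 'I_n -> A) (sigma : {perm 'I_n} -> A) : Prop :=
      (forall i j, x i * x j = x j * x i) /\
      (forall i, c i * c i = 1) /\
      (forall i j, i != j -> c i * c j = - (c j * c i)) /\
      sigma 1%g = 1 /\ (forall s t, sigma (s * t)%g = sigma t * sigma s) /\
      (forall i, x i * c i = - (c i * x i)) /\
      (forall i j, i != j -> x i * c j = c j * x i) /\
      (forall (s : {perm 'I_n}) i, sigma s * c i = c (s i) * sigma s) /\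
      (forall i j : 'I_n, val j = (val i).+1 ->
         x j * sigma (tperm i j) - sigma (tperm i j) * x i = u *: (1 - c j * c i)) /\
      (forall i j k : 'I_n, val j = (val i).+1 -> k != i -> k != j ->
         x k * sigma (tperm i j) = sigma (tperm i j) * x k).

(* Main.v *)
Require Import Defs.
From HB Require Import structures.
From mathcomp Require Import all_boot all_order all_algebra all_fingroup.
From mathcomp Require Import complex Rstruct.
Import GRing.Theory.
Local Open Scope ring_scope.

Section Aux.
Variable A : algType Cplx.

Lemma ics0 : in_comm_span (0 : A).
Proof. by exists [::]; rewrite big_nil. Qed.

Lemma icsD (a b : A) : in_comm_span a -> in_comm_span b -> in_comm_span (a + b).
Proof. by move=> [s ->] [t ->]; exists (s ++ t); rewrite big_cat. Qed.

Lemma icsZ (k : Cplx) (a : A) : in_comm_span a -> in_comm_span (k *: a).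
Proof.
move=> [s ->]; exists [seq (k * t.1.1, t.1.2, t.2) | t <- s].
rewrite scaler_sumr big_map; apply: eq_bigr => t _ /=; by rewrite scalerA.
Qed.

Lemma icsC (a b : A) : in_comm_span (a * b - b * a).
Proof. by exists [:: (1, a, b)]; rewrite big_cons big_nil /= scale1r addr0. Qed.

Definition eqv (a b : A) := in_comm_span (a - b).

Lemma eqv_refl a : eqv a a.
Proof. by rewrite /eqv subrr; apply: ics0. Qed.

Lemma eqv_trans a b d : eqv a b -> eqv b d -> eqv a d.
Proof.
move=> h1 h2; have := icsD _ _ h1 h2.
by rewrite /eqv addrA subrK.
Qed.

Lemma eqv_Z k a b : eqv a b -> eqv (k *: a) (k *: b).
Proof. by move=> h; rewrite /eqv -scalerBr; apply: icsZ. Qed.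

Definition sgn (e : Cplx) := e = 1 \/ e = -1.

Lemma sgnM e f : sgn e -> sgn f -> sgn (e * f).
Proof.
by move=> [->|->] [->|->]; rewrite ?mul1r ?mulr1 ?mulrNN ?mulr1; [left|right|right|left].
Qed.
End Aux.
Arguments ics0 {A}. Arguments icsD {A}. Arguments icsZ {A}. Arguments icsC {A}.
Arguments eqv {A}. Arguments eqv_refl {A}. Arguments eqv_trans {A a b d}. Arguments eqv_Z {A}.

Theorem lemma3p1p2 (n : nat) (u : Cplx) (A : algType Cplx)
  (x c : 'I_n -> A) (sigma : {perm 'I_n} -> A) :
  HC_relations u x c sigma ->
  forall I : {set 'I_n}, ~~ odd #|I| ->
  exists eps : Cplx, (eps = 1 \/ eps = -1) /\
    in_comm_span (sigma (ncycle n) * cI c I - eps *: sigma (ncycle n)).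
Proof.
move=> [_ [cc [cac [_ [_ [_ [_ [sc _]]]]]]]] I hI.
set w := sigma (ncycle n).
pose pc (s : seq 'I_n) := \prod_(i <- s) c i.
have pcc : forall s i, exists e, sgn e /\ pc s * c i = e *: (c i * pc s).
  elim=> [|q s IH] i.
    by exists 1; split; [left|rewrite /pc big_nil mul1r mulr1 scale1r].
  have [e [se he]] := IH i.
  rewrite /pc big_cons -mulrA.
  rewrite /pc in he; rewrite he -scalerAr mulrA.
  case: (eqVneq q i) => [->|nqi].
    by exists e; split => //; rewrite !mulrA.
  exists (- e); split; first by case: se => ->; [right|left; rewrite opprK].
  rewrite cac; [by rewrite mulNr scaleNr scalerN opprK mulrA | by rewrite eq_sym].
have conj : forall (X : A) j, eqv X (c j * X * c j).
  move=> X j; have := icsZ (-1) _ (icsC (c j) (X * c j)).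
  by rewrite -[X * c j * c j]mulrA cc mulr1 mulrA scaleN1r opprB /eqv.
have shift1 : forall a s, exists e, sgn e /\
    eqv (w * (c a * pc s)) (e *: (w * (c (ncycle n a) * pc s))).
  move=> a s; have [e [se he]] := pcc s (ncycle n a).
  exists e; split => //.
  apply: eqv_trans (conj _ (ncycle n a)) _.
  have -> : c (ncycle n a) * (w * (c a * pc s)) * c (ncycle n a)
      = e *: (w * (c (ncycle n a) * pc s)).
    rewrite mulrA -(sc (ncycle n) a) -/w -!mulrA (mulrA (c a)) cc mul1r.
    by rewrite he -scalerAr.
  exact: eqv_refl.
have shiftk : forall k a s, exists e, sgn e /\
    eqv (w * (c a * pc s)) (e *: (w * (c ((ncycle n ^+ k)%g a) * pc s))).
  elim=> [|k IH] a s.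
    by exists 1; split; [left| rewrite expg0 perm1 scale1r; exact: eqv_refl].
  have [e [se he]] := IH a s.
  have [f [sf hf]] := shift1 ((ncycle n ^+ k)%g a) s.
  exists (e * f); split; first exact: sgnM.
  rewrite expgSr permM -scalerA; exact: eqv_trans he (eqv_Z e _ _ hf).
have hv : forall k (a : 'I_n), val ((ncycle n ^+ k)%g a) = ((a + k) %% n)%N.
  elim=> [|k IH] a; first by rewrite expg0 perm1 addn0 modn_small.
  by rewrite expgSr permM /ncycle permE /= IH -addn1 modnDml addn1 addnS.
have reach : forall a b : 'I_n, exists k, (ncycle n ^+ k)%g a = b.
  move=> a b; exists (b + (n - a))%N; apply: val_inj; rewrite hv.
  by rewrite addnCA subnKC ?(ltnW (ltn_ord a)) // modnDr modn_small.
have main : forall m s, (size s <= m)%N -> ~~ odd (size s) ->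
    exists e, sgn e /\ eqv (w * pc s) (e *: w).
  elim=> [|m IH] [|a [|b t]] //= hs ho;
    try by exists 1; split; [left|rewrite /pc big_nil mulr1 scale1r; exact: eqv_refl].
  have [k hk] := reach a b.
  have [e [se he]] := shiftk k a (b :: t).
  have ho' : ~~ odd (size t) by rewrite negbK in ho.
  have [f [sf hf]] := IH t (ltnW hs) ho'.
  exists (e * f); split; first exact: sgnM.
  have E1 : pc [:: a, b & t] = c a * pc (b :: t) by rewrite /pc big_cons.
  have E2 : c b * pc (b :: t) = pc t by rewrite /pc big_cons mulrA cc mul1r.
  move: he; rewrite hk E1 E2 => he.
  by rewrite -scalerA; exact: eqv_trans he (eqv_Z e _ _ hf).
have hI' : ~~ odd (size (enum I)) by rewrite -cardE.
have [e [se he]] := main _ (enum I) (leqnn _) hI'.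
exists e; split => //.
have -> : cI c I = pc (enum I).
  by rewrite /cI /pc -big_filter deprecated_filter_index_enum.
exact: he.
Qed.
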